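(* Let $\mathcal{C}$ be a Hom-finite Krull-Schmidt additive $k$-category and let $\mathcal{W}$ be a wing of $\Gamma_{\mathcal{C}}$. If the quasi-simple objects of $\mathcal{W}$ are pairwise orthogonal bricks, then $\mathcal{W}$ is schurian.
   Context: $\Gamma_{\mathcal{C}}$ is the Auslander-Reiten quiver of $\mathcal{C}$ with translation $\tau$. A wing of rank $n\ge1$ is a convex, trivially valued subquiver $\mathcal{W}$ of $\Gamma_{\mathcal{C}}$ whose vertices are pairwise distinct objects $X_{ij}$ with $1\le j\le i\le n$, whose arrows are exactly one arrow $X_{ij}\to X_{i+1,j}$ for each $j\le i<n$ and one arrow $X_{ij}\to X_{i-1,j-1}$ for each $2\le j\le i$, and such that $\tau X_{ij}=X_{i,j+1}$ for all $1\le j<i\le n$ (so there are almost split sequences $X_{n,j+1}\to X_{n-1,j}\to X_{nj}$ and $X_{i,j+1}\to X_{i-1,j}\oplus X_{i+1,j+1}\to X_{ij}$ for $j<i<n$). $X_{11}$ is the wing vertex and $X_{n1},\dots,X_{nn}$ are the quasi-simple objects. An object is a brick if its endomorphism algebra is $k$. Two objects $X,Y$ are orthogonal if $\mathrm{Hom}(X,Y)=0=\mathrm{Hom}(Y,X)$. A convex subquiver $\Sigma$ is schurian if for all $X,Y\in\Sigma$, $\dim_k\mathrm{Hom}_{\mathcal{C}}(X,Y)\le1$, and $\mathrm{Hom}_{\mathcal{C}}(X,Y)=0$ whenever $Y$ is not a successor of $X$ in $\Sigma$ (every object counts as a successor of itself). *)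

(* Defs.v *)
From HB Require Import structures.
From mathcomp Require Import all_boot all_order all_algebra.
Set Implicit Arguments.
Unset Strict Implicit.
Unset Printing Implicit Defensive.
Import GRing.Theory.
Local Open Scope ring_scope.

(* A k-linear category whose Hom-spaces are finite-dimensional k-vector spaces
   (vectType = finite-dimensional), i.e. a Hom-finite k-category. *)
Record kcat (k : fieldType) := KCat {
  ob :> Type;
  hom : ob -> ob -> vectType k;
  comp : forall X Y Z : ob, hom Y Z -> hom X Y -> hom X Z;
  idm : forall X : ob, hom X X;
  compA : forall (X Y Z W : ob) (h : hom Z W) (g : hom Y Z) (f : hom X Y),
      comp h (comp g f) = comp (comp h g) f;
  comp1m : forall (X Y : ob) (f : hom X Y), comp (idm Y) f = f;
  compm1 : forall (X Y : ob) (f : hom X Y), comp f (idm X) = f;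
  comp_linl : forall (X Y Z : ob) (f : hom X Y) (a : k) (g1 g2 : hom Y Z),
      comp (a *: g1 + g2) f = a *: comp g1 f + comp g2 f;
  comp_linr : forall (X Y Z : ob) (g : hom Y Z) (a : k) (f1 f2 : hom X Y),
      comp g (a *: f1 + f2) = a *: comp g f1 + comp g f2
}.

Arguments hom {k} _ _ _.
Arguments comp {k _ X Y Z}.
Arguments idm {k _}.

Notation "g \oc f" := (comp g f) (at level 40, left associativity).

Section Defs.
Variables (k : fieldType) (C : kcat k).

Definition invertible (X Y : C) (f : hom C X Y) :=
  exists g : hom C Y X, g \oc f = idm X /\ f \oc g = idm Y.

Definition isoC (X Y : C) := exists f : hom C X Y, invertible f.

Definition is_biproduct (X1 X2 S : C) (i1 : hom C X1 S) (i2 : hom C X2 S)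
  (p1 : hom C S X1) (p2 : hom C S X2) :=
  [/\ p1 \oc i1 = idm X1, p2 \oc i2 = idm X2, p1 \oc i2 = 0, p2 \oc i1 = 0
    & i1 \oc p1 + i2 \oc p2 = idm S].

Definition additive_cat :=
  (exists Z : C, idm Z = 0) /\
  forall X1 X2 : C, exists (S : C) (i1 : hom C X1 S) (i2 : hom C X2 S)
    (p1 : hom C S X1) (p2 : hom C S X2), is_biproduct i1 i2 p1 p2.

Definition local_end (X : C) :=
  idm X <> 0 /\ forall f : hom C X X, invertible f \/ invertible (idm X - f).

Definition krull_schmidt :=
  forall X : C, exists (n : nat) (Y : 'I_n -> C)
    (ins : forall i, hom C (Y i) X) (prs : forall i, hom C X (Y i)),
    [/\ forall i, local_end (Y i),
        forall i, prs i \oc ins i = idm (Y i),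
        forall i j, i != j -> prs j \oc ins i = 0
      & \sum_(i < n) ins i \oc prs i = idm X].

Definition indecomposable (X : C) :=
  idm X <> 0 /\
  forall (X1 X2 : C) (i1 : hom C X1 X) (i2 : hom C X2 X)
    (p1 : hom C X X1) (p2 : hom C X X2),
    is_biproduct i1 i2 p1 p2 -> idm X1 = 0 \/ idm X2 = 0.

Definition radC (X Y : C) (f : hom C X Y) :=
  forall g : hom C Y X, invertible (idm X - g \oc f).

Definition rad2C (X Y : C) (f : hom C X Y) :=
  exists (n : nat) (Z : 'I_n -> C) (h : forall i, hom C X (Z i))
    (g : forall i, hom C (Z i) Y),
    (forall i, radC (h i) /\ radC (g i)) /\ f = \sum_(i < n) g i \oc h i.

(* arrows X -> Y of the Auslander-Reiten quiver: X, Y indecomposable and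
   irr(X,Y) = radC(X,Y)/radC^2(X,Y) <> 0 *)
Definition arrowG (X Y : C) :=
  [/\ indecomposable X, indecomposable Y &
      exists f : hom C X Y, radC f /\ ~ rad2C f].

(* the arrow X -> Y has trivial valuation (1,1): irr(X,Y) is one-dimensional
   both over the division ring End(Y)/radC(Y,Y) and over End(X)/radC(X,X) *)
Definition trivially_valued (X Y : C) :=
  (exists f0 : hom C X Y, [/\ radC f0, ~ rad2C f0 &
     forall f : hom C X Y, radC f -> exists a : hom C Y Y, rad2C (f - a \oc f0)])
  /\
  (exists f0 : hom C X Y, [/\ radC f0, ~ rad2C f0 &
     forall f : hom C X Y, radC f -> exists b : hom C X X, rad2C (f - f0 \oc b)]).

(* almost split sequences in the sense of S. Liu *)
Definition section (X Y : C) (f : hom C X Y) :=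
  exists r : hom C Y X, r \oc f = idm X.
Definition retraction (Y Z : C) (g : hom C Y Z) :=
  exists s : hom C Z Y, g \oc s = idm Z.

Definition left_almost_split (X Y : C) (f : hom C X Y) :=
  ~ section f /\
  forall (M : C) (u : hom C X M), ~ section u -> exists v : hom C Y M, u = v \oc f.
Definition right_almost_split (Y Z : C) (g : hom C Y Z) :=
  ~ retraction g /\
  forall (M : C) (u : hom C M Z), ~ retraction u -> exists v : hom C M Y, u = g \oc v.
Definition left_minimal (X Y : C) (f : hom C X Y) :=
  forall h : hom C Y Y, h \oc f = f -> invertible h.
Definition right_minimal (Y Z : C) (g : hom C Y Z) :=
  forall h : hom C Y Y, g \oc h = g -> invertible h.
Definition pseudo_kernel (X Y Z : C) (f : hom C X Y) (g : hom C Y Z) :=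
  g \oc f = 0 /\
  forall (M : C) (u : hom C M Y), g \oc u = 0 -> exists v : hom C M X, u = f \oc v.
Definition pseudo_cokernel (X Y Z : C) (f : hom C X Y) (g : hom C Y Z) :=
  g \oc f = 0 /\
  forall (M : C) (u : hom C Y M), u \oc f = 0 -> exists v : hom C Z M, u = v \oc g.

Definition almost_split (X Y Z : C) (f : hom C X Y) (g : hom C Y Z) :=
  [/\ left_almost_split f /\ left_minimal f,
      right_almost_split g /\ right_minimal g,
      pseudo_kernel f g & pseudo_cokernel f g].

Definition in_wing (n : nat) (p : nat * nat) := (1 <= p.2 <= p.1)%N && (p.1 <= n)%N.

Definition wing_arrow (n : nat) (p q : nat * nat) :=
  [/\ in_wing n p, in_wing n q &
      q = (p.1.+1, p.2) \/ (q = (p.1.-1, p.2.-1) /\ (2 <= p.2)%N)].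

(* q is a successor of p in the wing (reflexive: p is a successor of itself) *)
Inductive wing_reach (n : nat) : nat * nat -> nat * nat -> Prop :=
| wr_refl p : wing_reach n p p
| wr_step p q r : wing_arrow n p q -> wing_reach n q r -> wing_reach n p r.

(* X : nat -> nat -> C, with X i j (for 1 <= j <= i <= n) the vertex X_ij,
   forms a wing of rank n of the Auslander-Reiten quiver *)
Definition is_wing (n : nat) (X : nat -> nat -> C) :=
  (1 <= n)%N /\
  (forall i j, in_wing n (i, j) -> indecomposable (X i j)) /\
  (forall i j i' j', in_wing n (i, j) -> in_wing n (i', j') ->
     isoC (X i j) (X i' j') -> (i, j) = (i', j')) /\
  (forall i j i' j', in_wing n (i, j) -> in_wing n (i', j') ->
     (arrowG (X i j) (X i' j') <-> wing_arrow n (i, j) (i', j'))) /\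
  (forall i j i' j', wing_arrow n (i, j) (i', j') ->
     trivially_valued (X i j) (X i' j')) /\
  (* convex: every path of Gamma between vertices of W lies in W *)
  (forall i j i' j' (m : nat) (Y : nat -> C),
     in_wing n (i, j) -> in_wing n (i', j') ->
     isoC (Y 0%N) (X i j) -> isoC (Y m) (X i' j') ->
     (forall t, (t < m)%N -> arrowG (Y t) (Y t.+1)) ->
     forall t, (t <= m)%N ->
       exists a b, in_wing n (a, b) /\ isoC (Y t) (X a b)) /\
  (* tau X_ij = X_{i,j+1}, with almost split sequences
       X_{n,j+1} -> X_{n-1,j} -> X_nj and
       X_{i,j+1} -> X_{i-1,j} (+) X_{i+1,j+1} -> X_ij  (j < i < n) *)
  (forall j, (1 <= j < n)%N ->
     exists (f : hom C (X n j.+1) (X n.-1 j)) (g : hom C (X n.-1 j) (X n j)),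
       almost_split f g) /\
  (forall i j, (1 <= j < i)%N -> (i < n)%N ->
     exists (S : C) (i1 : hom C (X i.-1 j) S) (i2 : hom C (X i.+1 j.+1) S)
       (p1 : hom C S (X i.-1 j)) (p2 : hom C S (X i.+1 j.+1))
       (f : hom C (X i j.+1) S) (g : hom C S (X i j)),
       is_biproduct i1 i2 p1 p2 /\ almost_split f g).

Definition brick (X : C) := \dim (fullv : {vspace hom C X X}) = 1%N.

Definition orthogonal_obj (X Y : C) :=
  (forall f : hom C X Y, f = 0) /\ (forall g : hom C Y X, g = 0).

Definition schurian_wing (n : nat) (X : nat -> nat -> C) :=
  forall i j i' j', in_wing n (i, j) -> in_wing n (i', j') ->
    (\dim (fullv : {vspace hom C (X i j) (X i' j')}) <= 1)%N /\
    (~ wing_reach n (i, j) (i', j') -> forall f : hom C (X i j) (X i' j'), f = 0).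

End Defs.

(* Main.v *)
Require Import Defs.
From HB Require Import structures.
From mathcomp Require Import all_boot all_order all_algebra.
From mathcomp Require Import zify.
Set Implicit Arguments. Unset Strict Implicit. Unset Printing Implicit Defensive.
Import GRing.Theory.
Local Open Scope ring_scope.

Notation homC := Defs.hom.
Section LA.
Variable k : fieldType.

Lemma dim_img_le (U V : vectType k) (f : 'Hom(U, V)) :
  (\dim (f @: fullv) <= \dim (fullv : {vspace U}))%N.
Proof. by rewrite -(limg_ker_dim f fullv) leq_addl. Qed.

Lemma exact_dim (U V W : vectType k) (phi : U -> V) (psi : W -> U)
  (lphi : linear phi) (lpsi : linear psi) (extra : bool) :
  (forall u, phi u = 0 -> exists w, u = psi w) ->
  (extra -> exists v0, forall u, phi u <> v0) ->
  (\dim (fullv : {vspace U}) + extra <= \dim (fullv : {vspace W}) + \dim (fullv : {vspace V}))%N.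
Proof.
move=> hker hex.
pose Phi : {linear U -> V} := HB.pack phi (GRing.isLinear.Build _ _ _ _ phi lphi).
pose Psi : {linear W -> U} := HB.pack psi (GRing.isLinear.Build _ _ _ _ psi lpsi).
rewrite -(limg_ker_dim (linfun Phi) fullv).
have h1 : (\dim (fullv :&: lker (linfun Phi)) <= \dim (fullv : {vspace W}))%N.
  apply: leq_trans (dim_img_le (linfun Psi)).
  apply: dimvS; apply/subvP => u; rewrite memv_cap memv_ker lfunE /= => /andP[_ /eqP].
  move=> /hker [w ->]; have := memv_img (linfun Psi) (memvf w); by rewrite lfunE.
have h2 : (\dim (linfun Phi @: fullv) + extra <= \dim (fullv : {vspace V}))%N.
  case: extra hex => [/(_ isT) [v0 hv0]|_]; last by rewrite addn0 dimvS // subvf.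
  rewrite addn1 ltn_neqAle dimvS ?subvf // andbT.
  apply/negP => /eqP hd.
  have : (linfun Phi @: fullv == fullv)%VS by rewrite eqEdim subvf hd leqnn.
  move=> /eqP hf; have : v0 \in (linfun Phi @: fullv)%VS by rewrite hf memvf.
  by case/memv_imgP => u _; rewrite lfunE /= => /esym /hv0.
rewrite -addnA; exact: leq_add.
Qed.

Lemma split_dim (A B S : vectType k) (a : A -> S) (b : B -> S) (pa : S -> A) (pb : S -> B)
  (la : linear a) (lb : linear b) (lpa : linear pa) (lpb : linear pb) :
  (forall x, pa (a x) = x) -> (forall y, pb (b y) = y) -> (forall y, pa (b y) = 0) ->
  (\dim (fullv : {vspace A}) + \dim (fullv : {vspace B}) <= \dim (fullv : {vspace S}))%N.
Proof.
move=> hpa hpb hpab.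
pose Pa : {linear S -> A} := HB.pack pa (GRing.isLinear.Build _ _ _ _ pa lpa).
pose Pb : {linear S -> B} := HB.pack pb (GRing.isLinear.Build _ _ _ _ pb lpb).
pose Bl : {linear B -> S} := HB.pack b (GRing.isLinear.Build _ _ _ _ b lb).
rewrite -(limg_ker_dim (linfun Pa) fullv) addnC.
have -> : (linfun Pa @: fullv)%VS = fullv.
  apply/eqP; rewrite eqEdim subvf /=; apply: dimvS; apply/subvP => x _.
  by have := memv_img (linfun Pa) (memvf (a x)); rewrite lfunE /= hpa.
rewrite leq_add2r.
have hB : (\dim (fullv : {vspace B}) <= \dim (linfun Bl @: fullv))%N.
  apply: (@leq_trans (\dim (linfun Pb @: (linfun Bl @: fullv)))).
    apply: dimvS; apply/subvP => y _.
    have hy : b y \in (linfun Bl @: fullv)%VS.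
      by have := memv_img (linfun Bl) (memvf y); rewrite lfunE.
    by have := memv_img (linfun Pb) hy; rewrite lfunE /= hpb.
  by rewrite -(limg_ker_dim (linfun Pb) (linfun Bl @: fullv)) leq_addl.
apply: leq_trans hB _; apply: dimvS; apply/subvP => s /memv_imgP [y _ ->].
by rewrite memv_cap memvf memv_ker !lfunE /= hpab.
Qed.


Section Cat.
Variable C : kcat k.

Definition hd (P Q : C) := \dim (fullv : {vspace (homC C P Q)}).

Lemma comp0m (P Q R : C) (f : homC C P Q) : (0 : homC C Q R) \oc f = 0.
Proof.
have := comp_linl f 1 (0 : homC C Q R) 0; rewrite !scale1r addr0.
by move=> h; apply: (addrI ((0 : homC C Q R) \oc f)); rewrite addr0 -h.
Qed.

Lemma compm0 (P Q R : C) (g : homC C Q R) : g \oc (0 : homC C P Q) = 0.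
Proof.
have := comp_linr g 1 (0 : homC C P Q) 0; rewrite !scale1r addr0.
by move=> h; apply: (addrI (g \oc (0 : homC C P Q))); rewrite addr0 -h.
Qed.

Lemma post_lin (M S Z : C) (g : homC C S Z) : linear (fun u : homC C M S => g \oc u).
Proof. by move=> a u v; rewrite comp_linr. Qed.

Lemma pre_lin (X S N : C) (f : homC C X S) : linear (fun u : homC C S N => u \oc f).
Proof. by move=> a u v; rewrite comp_linl. Qed.

Lemma cov_exact (M Xo S Z : C) (f : homC C Xo S) (g : homC C S Z) :
  almost_split f g -> (hd M S <= hd M Xo + hd M Z)%N.
Proof.
case=> _ _ [_ hk] _.
have := @exact_dim _ _ _ _ _ (@post_lin M _ _ g) (@post_lin M _ _ f) false.
rewrite addn0; apply => //.
by move=> u /hk [v ->]; exists v.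
Qed.

Lemma cov_exact_self (Xo S Z : C) (f : homC C Xo S) (g : homC C S Z) :
  almost_split f g -> (hd Z S + 1 <= hd Z Xo + hd Z Z)%N.
Proof.
case=> _ [[hr _] _] [_ hk] _.
apply: (@exact_dim _ _ _ _ _ (@post_lin Z _ _ g) (@post_lin Z _ _ f) true).
  by move=> u /hk [v ->]; exists v.
by move=> _; exists (idm Z) => u hu; apply: hr; exists u.
Qed.

Lemma contra_exact (N Xo S Z : C) (f : homC C Xo S) (g : homC C S Z) :
  almost_split f g -> (hd S N <= hd Z N + hd Xo N)%N.
Proof.
case=> _ _ _ [_ hk].
have := @exact_dim _ _ _ _ _ (@pre_lin _ _ N f) (@pre_lin _ _ N g) false.
rewrite addn0; apply => //.
by move=> u /hk [v ->]; exists v.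
Qed.

Lemma contra_exact_self (Xo S Z : C) (f : homC C Xo S) (g : homC C S Z) :
  almost_split f g -> (hd S Xo + 1 <= hd Z Xo + hd Xo Xo)%N.
Proof.
case=> [[[hs _] _]] _ _ [_ hk].
apply: (@exact_dim _ _ _ _ _ (@pre_lin _ _ Xo f) (@pre_lin _ _ Xo g) true).
  by move=> u /hk [v ->]; exists v.
by move=> _; exists (idm Xo) => u hu; apply: hs; exists u.
Qed.

Lemma split_cov (M A B S : C) (i1 : homC C A S) (i2 : homC C B S) p1 p2 :
  is_biproduct i1 i2 p1 p2 -> (hd M A + hd M B <= hd M S)%N.
Proof.
case=> h11 h22 h12 h21 _.
apply: (@split_dim _ _ _ _ _ _ _ (@post_lin M _ _ i1) (@post_lin M _ _ i2) (@post_lin M _ _ p1) (@post_lin M _ _ p2)).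
- by move=> x /=; rewrite Defs.compA h11 comp1m.
- by move=> x /=; rewrite Defs.compA h22 comp1m.
- by move=> x /=; rewrite Defs.compA h12 comp0m.
Qed.

Lemma split_contra (N A B S : C) (i1 : homC C A S) (i2 : homC C B S) p1 p2 :
  is_biproduct i1 i2 p1 p2 -> (hd A N + hd B N <= hd S N)%N.
Proof.
case=> h11 h22 h12 h21 _.
apply: (@split_dim _ _ _ _ _ _ _ (@pre_lin _ _ N p1) (@pre_lin _ _ N p2) (@pre_lin _ _ N i1) (@pre_lin _ _ N i2)).
- by move=> x /=; rewrite -Defs.compA h11 compm1.
- by move=> x /=; rewrite -Defs.compA h22 compm1.
- by move=> x /=; rewrite -Defs.compA h21 compm0.
Qed.

End Cat.
End LA.

Local Open Scope nat_scope.

Lemma key_gen n (F : nat -> nat -> nat) a b e :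
  (a <= n)%N ->
  (forall i j, (1 <= j < i)%N -> (i < n)%N ->
     (F i.-1 j + F i.+1 j.+1 + ((a == i) && (b == j + e)) <= F i j.+1 + F i j)%N) ->
  (forall j, (1 <= j < n)%N ->
     (F n.-1 j + ((a == n) && (b == j + e)) <= F n j.+1 + F n j)%N) ->
  forall i j, (1 <= j <= i)%N -> (i < n)%N ->
     (F i j + ((b == j + e) && (i < a)) <= F i.+1 j.+1 + F n j)%N.
Proof.
move=> ha hm hr i j hij hin.
have [d hd] : exists d, i + d.+1 = n by exists (n - i.+1); lia.
elim: d i hd hij {hin} => [|d IH] i hd hij.
  have hn : n = i.+1 by rewrite -hd addn1.
  clear hd hm; subst n; have := hr j ltac:(lia); rewrite /=.
  case: (b == j + e); case: ltnP => ?; case: (a == i.+1) / eqP => ?; rewrite /= ?andbF; lia.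
have := hm i.+1 j ltac:(lia) ltac:(lia); rewrite /=.
have := IH i.+1 ltac:(lia) ltac:(lia).
case: (b == j + e); case: (a == i.+1) / eqP => ha'; rewrite /= ?andbF; lia.
Qed.

Lemma down_ind n (P : nat -> Prop) :
  P n -> (forall i, (i < n)%N -> P i.+1 -> P i) -> forall i, (i <= n)%N -> P i.
Proof.
move=> hn hs i hi; have [d hd] : exists d, i + d = n by exists (n - i); lia.
elim: d i hd {hi} => [|d IH] i hd; first by move: hd; rewrite addn0 => ->.
apply: hs; first lia. apply: IH; lia.
Qed.

Lemma step1 n (G : nat -> nat -> nat) m :
  (forall i j, (1 <= j <= i)%N -> (i < n)%N ->
     (G i j + ((m == j + 1) && (i < n)) <= G i.+1 j.+1 + G n j)%N) ->
  (forall j, (1 <= j <= n)%N -> (G n j <= (j == m))%N) ->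
  forall i j, (1 <= j <= i)%N -> (i <= n)%N -> (G i j <= (j == m))%N.
Proof.
move=> hk hn i j hij hi.
pose P i := forall j, (1 <= j <= i)%N -> (G i j <= (j == m))%N.
suff : P i by apply.
apply: (@down_ind n P _ _ i hi); first by move=> j' hj'; apply: hn; lia.
move=> i' hi' IH j' hj'.
have := hk i' j' hj' hi'; have := IH j'.+1 ltac:(lia); rewrite hi' andbT.
have := hn j' ltac:(lia).
case: (j' == m) / eqP => ?; case: (j'.+1 == m) / eqP => ?; case: (m == j' + 1) / eqP => ? /=; lia.
Qed.

Lemma step2 n (F : nat -> nat -> nat) a b :
  (1 <= b <= a)%N -> (a <= n)%N ->
  (forall i j, (1 <= j <= i)%N -> (i < n)%N ->
     (F i j + ((b == j + 0) && (i < a)) <= F i.+1 j.+1 + F n j)%N) ->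
  (forall j, (1 <= j <= n)%N -> (F n j <= (b == j))%N) ->
  forall i j, (1 <= j <= i)%N -> (i <= n)%N ->
    (F i j <= (b == j + (n - i)) + ((j <= b < j + (n - i)) && (a <= i + b - j)))%N.
Proof.
move=> hab han hk hn i j hij hi.
pose P i := forall j, (1 <= j <= i)%N ->
    (F i j <= (b == j + (n - i)) + ((j <= b < j + (n - i)) && (a <= i + b - j)))%N.
suff : P i by apply.
apply: (@down_ind n P _ _ i hi).
  move=> j' hj'; rewrite subnn addn0; apply: leq_trans (hn j' ltac:(lia)) _.
  exact: leq_addr.
move=> i' hi' IH j' hj'.
have := hk i' j' hj' hi'; have := IH j'.+1 ltac:(lia).
have := hn j' ltac:(lia).
case: (b == j') / eqP => ?; case: (b == j' + 0) / eqP => ?;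
case: (b == j' + (n - i')) / eqP => ?; case: (b == j'.+1 + (n - i'.+1)) / eqP => ?;
case: (i' < a) / ltP => ?; case: (j' <= b) / leP => ?; case: (b < j' + (n - i')) / ltP => ?;
case: (j'.+1 <= b) / leP => ?; case: (b < j'.+1 + (n - i'.+1)) / ltP => ?;
case: (a <= i' + b - j') / leP => ?; case: (a <= i'.+1 + b - j'.+1) / leP => ? /=; lia.
Qed.

Lemma reach_trans n p q r : wing_reach n p q -> wing_reach n q r -> wing_reach n p r.
Proof. by elim=> // p0 q0 r0 ha _ IH h; apply: wr_step ha (IH h). Qed.

Lemma reach_down n i0 j d : (1 <= j <= i0)%N -> (i0 + d <= n)%N ->
  wing_reach n (i0, j) (i0 + d, j).
Proof.
elim: d i0 => [|d IH] i0 hj hd; first by rewrite addn0; apply: wr_refl.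
apply: (@wr_step _ _ (i0.+1, j)).
  split; rewrite /in_wing /=; [apply/andP; split => //; lia | apply/andP; split; lia | by left].
rewrite -addSnnS; apply: IH; lia.
Qed.

Lemma reach_up n a b t : (t < b)%N -> (b <= a <= n)%N ->
  wing_reach n (a, b) (a - t, b - t).
Proof.
elim: t a b => [|t IH] a b ht hab; first by rewrite !subn0; apply: wr_refl.
apply: (@wr_step _ _ (a.-1, b.-1)).
  split; rewrite /in_wing /=; [apply/andP; split; lia | apply/andP; split; lia | right; split => //; lia].
have -> : (a - t.+1 = a.-1 - t)%N by lia.
have -> : (b - t.+1 = b.-1 - t)%N by lia.
apply: IH; lia.
Qed.

Lemma reach_gen n a b i j : (1 <= b <= a)%N -> (a <= n)%N -> (1 <= j)%N -> (i <= n)%N ->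
  (j <= b)%N -> (a + j <= i + b)%N -> wing_reach n (a, b) (i, j).
Proof.
move=> hab han hj hi hjb hij.
apply: (@reach_trans _ _ (a - (b - j), j)).
  have := @reach_up n a b (b - j) ltac:(lia) ltac:(lia).
  by have -> : (b - (b - j) = j)%N by lia.
have := @reach_down n (a - (b - j)) j (i - (a - (b - j))) ltac:(lia) ltac:(lia).
by have -> : (a - (b - j) + (i - (a - (b - j))) = i)%N by lia.
Qed.

Local Open Scope ring_scope.
Section Main.
Variables (k : fieldType) (C : kcat k).

Lemma hd0 (P Q : C) : (forall f : homC C P Q, f = 0) -> hd P Q = 0%N.
Proof.
move=> hz; apply/eqP; rewrite dimv_eq0 -subv0; apply/subvP => f _.
by rewrite (hz f) mem0v.
Qed.

Lemma hd0_inv (P Q : C) : hd P Q = 0%N -> forall f : homC C P Q, f = 0.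
Proof.
move=> /eqP; rewrite dimv_eq0 => /eqP h0 f.
have := memvf f; rewrite h0 memv0 => /eqP; apply.
Qed.

End Main.

Theorem lemma1p7 (k : fieldType) (C : kcat k) (n : nat) (X : nat -> nat -> C) :
  additive_cat C -> krull_schmidt C -> is_wing n X ->
  (forall j, (1 <= j <= n)%N -> brick (X n j)) ->
  (forall j l, (1 <= j <= n)%N -> (1 <= l <= n)%N -> j != l ->
     orthogonal_obj (X n j) (X n l)) ->
  schurian_wing n X.
Proof.
move=> _ _ [hn [_ [_ [_ [_ [_ [hrow hmid]]]]]]] hbr hort.
pose H a b c d := hd (X a b) (X c d).
have cov_mid : forall a b i j, (1 <= j < i)%N -> (i < n)%N ->
    (H a b i.-1 j + H a b i.+1 j.+1 + ((a == i) && (b == j + 0)) <= H a b i j.+1 + H a b i j)%N.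
  move=> a b i j hij hi.
  have [S [i1 [i2 [p1 [p2 [f [g [hb has]]]]]]]] := hmid i j hij hi.
  have h1 := split_cov (X a b) hb.
  case: (a == i) / eqP => [ea|]; case: (b == j + 0) / eqP => [eb|] /=;
    rewrite ?addn0 ?andbF; try (have := cov_exact (X a b) has; rewrite /H; lia).
  have {}eb : b = j by lia. subst a b; have := cov_exact_self has; rewrite /H; lia.
have cov_row : forall a b j, (1 <= j < n)%N ->
    (H a b n.-1 j + ((a == n) && (b == j + 0)) <= H a b n j.+1 + H a b n j)%N.
  move=> a b j hj.
  have [f [g has]] := hrow j hj.
  case: (a == n) / eqP => [ea|]; case: (b == j + 0) / eqP => [eb|] /=;
    rewrite ?addn0 ?andbF; try (have := cov_exact (X a b) has; rewrite /H; lia).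
  have {}eb : b = j by lia. subst a b; have := cov_exact_self has; rewrite /H; lia.
have con_mid : forall c d i j, (1 <= j < i)%N -> (i < n)%N ->
    (H i.-1 j c d + H i.+1 j.+1 c d + ((c == i) && (d == j + 1)) <= H i j.+1 c d + H i j c d)%N.
  move=> c d i j hij hi.
  have [S [i1 [i2 [p1 [p2 [f [g [hb has]]]]]]]] := hmid i j hij hi.
  have h1 := split_contra (X c d) hb.
  case: (c == i) / eqP => [ea|]; case: (d == j + 1) / eqP => [eb|] /=;
    rewrite ?addn0 ?andbF; try (have := contra_exact (X c d) has; rewrite /H; lia).
  have {}eb : d = j.+1 by lia. subst c d; have := contra_exact_self has; rewrite /H; lia.
have con_row : forall c d j, (1 <= j < n)%N ->
    (H n.-1 j c d + ((c == n) && (d == j + 1)) <= H n j.+1 c d + H n j c d)%N.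
  move=> c d j hj.
  have [f [g has]] := hrow j hj.
  case: (c == n) / eqP => [ea|]; case: (d == j + 1) / eqP => [eb|] /=;
    rewrite ?addn0 ?andbF; try (have := contra_exact (X c d) has; rewrite /H; lia).
  have {}eb : d = j.+1 by lia. subst c d; have := contra_exact_self has; rewrite /H; lia.
have qs : forall j m, (1 <= j <= n)%N -> (1 <= m <= n)%N -> (H n j n m <= (j == m))%N.
  move=> j m hj hm; case: (j == m) / eqP => [->|hne].
    by rewrite /H /hd (hbr m hm).
  by rewrite /H hd0 //; case: (hort j m hj hm (introN eqP hne)).
have s1 : forall m, (1 <= m <= n)%N -> forall i j, (1 <= j <= i)%N -> (i <= n)%N ->
    (H i j n m <= (j == m))%N.
  move=> m hm; apply: (@step1 n (fun i j => H i j n m) m).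
    move=> i j hij hi.
    have := @key_gen n (fun i j => H i j n m) n m 1 (leqnn n) _ _ i j hij hi.
    apply; [move=> i' j' ?; exact: con_mid | move=> j' ?; exact: con_row].
  by move=> j hj; apply: qs.
move=> a b c d hab hcd.
move: hab hcd; rewrite /in_wing /= => /andP [hab han] /andP [hcd hcn].
have s2 := @step2 n (fun i j => H a b i j) a b hab han.
have hb := s2 _ _ c d hcd hcn.
have hb' : (H a b c d <= (b == d + (n - c)) + ((d <= b < d + (n - c)) && (a <= c + b - d)))%N.
  apply: hb.
    move=> i j hij hi.
    have := @key_gen n (fun i j => H a b i j) a b 0 han _ _ i j hij hi.
    apply; [move=> i' j' ?; exact: cov_mid | move=> j' ?; exact: cov_row].
  move=> j hj; have := s1 j hj a b hab han.
  by rewrite eq_sym.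
split.
  apply: leq_trans hb' _.
  case: (b == (d + (n - c))%N) / eqP => ?; case: ((d <= b < d + (n - c))%N) / idP => ? /=;
    rewrite ?andbF ?andbT; try case: leqP => ? /=; lia.
move=> hnr; apply: hd0_inv; apply/eqP; rewrite -leqn0.
apply: leq_trans hb' _.
case: (b == (d + (n - c))%N) / eqP => e1.
  exfalso; apply: hnr; apply: reach_gen; lia.
case: ((d <= b < d + (n - c))%N) / idP => e2 /=; last by [].
case: leqP => e3 //.
exfalso; apply: hnr; apply: reach_gen; lia.
Qed.
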